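(* For every $d\in\mathbb{N}$, the number of unlabeled $n$-vertex graphs in $\mathcal{X}_d$ is at least $n^{\frac{(d-2)n}{2}(1-o(1))}$ (as $n\to\infty$).
   Context: For a graph $G$, $s_k(G)$ is the number of unlabeled (isomorphism classes of) $k$-vertex subgraphs. An $n$-vertex graph $G$ is monotone $(c,\mathcal{Y},t)$-tiny if (1) for every integer $1\le k\le t(n)$ every $k$-vertex subgraph of $G$ is in $\mathcal{Y}$, and (2) for every integer $t(n)<k\le n$, $s_k(G)\le c^k$. $\mathcal{S}_d$ is the class of all graphs $G$ such that for every integer $k$ with $1000^{10(d+1)}\le k\le|V(G)|$, every $k$-vertex subgraph of $G$ has at most $k-1+k/\ln k$ edges. Let $c=c(d)$ be a constant such that, for $G_n$ uniform among graphs on $[n]$ with $\lceil d(n-1)/2\rceil$ edges, $\Pr[G_n$ is not monotone $(c,\mathcal{S}_d,\ln^2)$-tiny$]<200\sqrt{d/n}$ for all $n$ (such $c$ exists). Then $\mathcal{X}_d$ is the class of monotone $(c,\mathcal{S}_d,\ln^2)$-tiny unlabeled graphs $G$ having exactly $\lceil d(|V(G)|-1)/2\rceil$ edges, where $\ln^2(n)=(\ln n)^2$. *)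

(* Defs.v *)
From Stdlib Require Import Reals ClassicalEpsilon.
From mathcomp Require Import all_boot fingroup perm.

Set Implicit Arguments.
Unset Strict Implicit.
Unset Printing Implicit Defensive.
Local Open Scope R_scope.

(* Classical boolean reflection of a proposition (used only to form finite
   sets of graphs satisfying a real-valued property). *)
Definition pb (P : Prop) : bool :=
  if excluded_middle_informative P then true else false.

(* A graph embedded in the vertex universe 'I_n: a vertex set and an edge set;
   well-formedness (edges are 2-subsets of the vertex set) is [is_graph]. *)
Definition graph (n : nat) := ({set 'I_n} * {set {set 'I_n}})%type.

Definition is_graph n (G : graph n) : bool :=
  [forall e in G.2, (e \subset G.1) && (#|e| == 2)%N].

Definition subgraph n (H G : graph n) : bool :=
  [&& H.1 \subset G.1, H.2 \subset G.2 & is_graph H].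

(* Relabelling by a permutation of the universe; two embedded graphs are
   isomorphic iff one is a relabelling of the other. *)
Definition relabel n (s : {perm 'I_n}) (G : graph n) : graph n :=
  (s @: G.1, [set s @: (e : {set 'I_n}) | e in G.2]).

(* The isomorphism class (unlabeled graph) of G. *)
Definition iso_class n (G : graph n) : {set graph n} :=
  [set relabel s G | s : {perm 'I_n}].

Definition s_k n (G : graph n) (k : nat) : nat :=
  #|[set iso_class H | H in [set H : graph n | subgraph H G && (#|H.1| == k)%N]]|.

Definition in_Sd (d : nat) n (G : graph n) : Prop :=
  forall H : graph n, subgraph H G ->
    (1000 ^ (10 * (d + 1)) <= #|H.1|)%N ->
    (INR #|H.2| <= INR #|H.1| - 1 + INR #|H.1| / ln (INR #|H.1|)).

(* Monotone (c, Y, t)-tiny, for a graph G with |V(G)| = #|G.1|. *)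
Definition mono_tiny (c : R) (Y : forall n, graph n -> Prop) (t : nat -> R)
  n (G : graph n) : Prop :=
  (forall k : nat, (1 <= k)%N -> (INR k <= t #|G.1|) ->
     forall H : graph n, subgraph H G -> #|H.1| = k -> Y n H) /\
  (forall k : nat, (t #|G.1| < INR k) -> (k <= #|G.1|)%N ->
     (INR (s_k G k) <= c ^ k)).

Definition ln2 (n : nat) : R := (ln (INR n) ^ 2).

Definition Sd (d : nat) : forall n, graph n -> Prop := fun n G => in_Sd d G.

(* ceil(d (n-1) / 2), for n >= 1. *)
Definition nedges (d n : nat) : nat := ((d * (n - 1)).+1 %/ 2)%N.

Definition labelled (n m : nat) : {set graph n} :=
  [set G : graph n | [&& G.1 == setT, is_graph G & #|G.2| == m]].

Definition tinyb (d : nat) (c : R) n (G : graph n) : bool :=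
  pb (mono_tiny c (Sd d) ln2 G).

Definition prob_not_tiny (d : nat) (c : R) (n : nat) : R :=
  (INR #|[set G in labelled n (nedges d n) | ~~ tinyb d c G]|
   / INR #|labelled n (nedges d n)|).

Definition good_c (d : nat) (c : R) : Prop :=
  forall n : nat, (1 <= n)%N ->
    (prob_not_tiny d c n < 200 * sqrt (INR d / INR n)).

Definition countX (d : nat) (c : R) (n : nat) : nat :=
  #|[set iso_class G | G in [set G in labelled n (nedges d n) | tinyb d c G]]|.

(* Main.v *)
Require Import Defs.
From Stdlib Require Import Reals Lra.
From mathcomp Require Import all_boot fingroup perm zify.

Lemma lab_ge n m : ('C('C(n,2), m) <= #|labelled n m|)%N.
Proof.
set P := [set e : {set 'I_n} | #|e| == 2].
have cP : #|P| = 'C(n,2) by rewrite card_draws card_ord.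
rewrite -cP -cards_draws.
rewrite -(@card_imset _ _ (fun S => (setT : {set 'I_n}, S))); last first.
  by move=> S1 S2 [].
apply: subset_leq_card; apply/subsetP => G /imsetP [S]; rewrite inE => /andP [SP /eqP cS] ->.
rewrite inE /= eqxx cS eqxx andbT /=.
apply/forallP => e; apply/implyP => eS.
rewrite subsetT /=.
by move/subsetP: SP => /(_ _ eS); rewrite inE.
Qed.

Lemma iso_card n (G : graph n) : (#|iso_class G| <= n`!)%N.
Proof.
rewrite /iso_class -card_Sn.
apply: leq_trans (leq_imset_card _ _) _.
by apply: max_card.
Qed.

Lemma im1 (T : finType) (A : {set T}) : [set (1%g : {perm T}) x | x in A] = A.
Proof. by rewrite (eq_imset _ (fun x => perm1 x)) imset_id. Qed.

Lemma mem_iso n (G : graph n) : G \in iso_class G.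
Proof.
apply/imsetP; exists 1%g => //.
rewrite /relabel; case: G => V E /=.
by rewrite im1 (eq_imset _ (fun e : {set 'I_n} => @im1 _ e)) imset_id.
Qed.

Lemma cover_bound n (T : {set graph n}) :
  (#|T| <= #|[set iso_class G | G in T]| * n`!)%N.
Proof.
set I := [set iso_class G | G in T].
have sub : T \subset cover I.
  apply/subsetP => G GT; apply/bigcupP; exists (iso_class G).
    by apply: imset_f.
  exact: mem_iso.
apply: leq_trans (subset_leq_card sub) _.
apply: leq_trans (leq_card_cover I).1 _.
rewrite -sum_nat_const; apply: leq_sum => C /imsetP [G _ ->].
exact: iso_card.
Qed.

Lemma split_card n (L : {set graph n}) (p : graph n -> bool) :
  #|[set G in L | p G]| + #|[set G in L | ~~ p G]| = #|L|.
Proof.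
rewrite -(cardsID [set G | p G] L); congr addn; apply: eq_card => G; rewrite !inE.
  by rewrite andbC.
by rewrite andbC.
Qed.
Lemma expmono a b e : (a <= b -> a ^ e <= b ^ e)%N.
Proof. move=> ab; elim: e => [|e IH] //; rewrite !expnS; exact: leq_mul. Qed.

Lemma ffact_ge n m : ((n - m) ^ m <= n ^_ m)%N.
Proof.
elim: m n => [|m IH] n; first by rewrite ffactn0 expn0.
rewrite ffactnS expnS.
apply: leq_mul; first by rewrite leq_subr.
apply: leq_trans (IH n.-1).
apply: expmono. lia.
Qed.

Lemma fact_le m : (m`! <= m ^ m)%N.
Proof.
elim: m => [|m IH] //.
rewrite factS expnS.
apply: leq_mul => //.
apply: leq_trans IH _; apply: expmono; lia.
Qed.

Lemma bin_lb N m : ((N - m) ^ m <= 'C(N, m) * m ^ m)%N.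
Proof.
apply: leq_trans (ffact_ge N m) _.
by rewrite -bin_ffact leq_mul2l fact_le orbT.
Qed.

Lemma bin2_2 n : ('C(n, 2) * 2 = n * (n - 1))%N.
Proof. by rewrite -[2%N]/(2`!) bin_ffact ffactnS ffactn1 subn1. Qed.

Local Open Scope R_scope.

Lemma half_tiny d c n (hc : good_c d c) (hn : (1 <= n)%N)
  (hs : 200 * sqrt (INR d / INR n) <= 1/2) :
  (#|labelled n (nedges d n)| <= 2 * countX d c n * n`!)%N.
Proof.
have hT := @cover_bound n [set G in labelled n (nedges d n) | tinyb d c G].
have hS := @split_card n (labelled n (nedges d n)) (@tinyb d c n).
rewrite -/(countX d c n) in hT.
set L := (#|labelled n (nedges d n)|)%N in hS *.
set T := (#|[set G in labelled n (nedges d n) | tinyb d c G]|)%N in hS hT.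
set B := (#|[set G in labelled n (nedges d n) | ~~ tinyb d c G]|)%N in hS.
have [L0|Lpos] := posnP L; first by rewrite L0.
have hp := hc n hn.
rewrite /prob_not_tiny -/B -/L in hp.
have LR : 0 < INR L by apply: lt_0_INR; apply/ltP.
have h2 : INR (2 * B) < INR L.
  rewrite mult_INR.
  have H : INR B / INR L < 1/2 by lra.
  have -> : INR 2 = 2 by simpl; lra.
  apply (Rmult_lt_compat_r (INR L)) in H; last lra.
  unfold Rdiv in H. rewrite Rmult_assoc Rinv_l in H; [lra|apply: Rgt_not_eq; lra].
apply INR_lt in h2. move/ltP: h2 => h2.
lia.
Qed.

Lemma subINR a b : (b <= a)%N -> INR (a - b) = INR a - INR b.
Proof. move/leP => h; exact: minus_INR. Qed.

Lemma expINR a b : INR (a ^ b)%N = INR a ^ b.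
Proof. elim: b => [|b IH] //; rewrite expnS mult_INR IH /=; ring. Qed.

Lemma ln_le x y : 0 < x -> x <= y -> ln x <= ln y.
Proof.
move=> hx hxy; case: (Rle_lt_or_eq_dec _ _ hxy) => h.
  by apply: Rlt_le; apply: ln_increasing.
by rewrite h; apply: Rle_refl.
Qed.

Lemma exp_le' x y : x <= y -> exp x <= exp y.
Proof.
move=> hxy; case: (Rle_lt_or_eq_dec _ _ hxy) => h.
  by apply: Rlt_le; apply: exp_increasing.
by rewrite h; apply: Rle_refl.
Qed.

Lemma nat_main d c n (hc : good_c d c) (hn : (1 <= n)%N)
  (hs : 200 * sqrt (INR d / INR n) <= 1/2) :
  (('C(n,2) - nedges d n) ^ nedges d n <= 2 * countX d c n * n ^ n * nedges d n ^ nedges d n)%N.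
Proof.
apply: leq_trans (bin_lb _ _) _.
rewrite leq_mul2r; apply/orP; right.
apply: leq_trans (lab_ge _ _) _.
apply: leq_trans (half_tiny _ _ _ hc hn hs) _.
by rewrite leq_mul2l fact_le orbT.
Qed.

Lemma key_real d c n (hc : good_c d c) (hd : (1 <= d)%N) (hn : (2 * d + 3 <= n)%N)
  (hs : 200 * sqrt (INR d / INR n) <= 1/2) :
  0 < INR (countX d c n) /\
  INR d * (INR n - 1) / 2 * (ln (INR n) - ln (2 * INR d)) - INR n * ln (INR n) - ln 2
    <= ln (INR (countX d c n)).
Proof.
have hn1 : (1 <= n)%N by lia.
have H := nat_main _ _ _ hc hn1 hs.
set N := 'C(n,2) in H. set m := nedges d n in H.
have hN : (N * 2 = n * (n - 1))%N by rewrite bin2_2.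
have hm1 : (d * (n - 1) <= 2 * m)%N by rewrite /m /nedges; lia.
have hm2 : (2 * m <= d * (n - 1) + 1)%N by rewrite /m /nedges; lia.
have hmN : (m <= N)%N by nia.
set X := countX d c n in H *.
set r := INR n.
have r3 : 2 * INR d + 3 <= r.
  rewrite /r; have := le_INR _ _ (elimT leP hn). rewrite plus_INR mult_INR /=. lra.
have d1 : 1 <= INR d by have := le_INR _ _ (elimT leP hd); simpl; lra.
have rN : INR N * 2 = r * (r - 1).
  have := f_equal INR hN. rewrite !mult_INR subINR; last by lia.
  by simpl; rewrite /r; lra.
have rm1 : INR d * (r - 1) <= 2 * INR m.
  have := le_INR _ _ (elimT leP hm1). rewrite !mult_INR subINR; last by lia.
  by simpl; rewrite /r; lra.
have rm2 : 2 * INR m <= INR d * (r - 1) + 1.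
  have := le_INR _ _ (elimT leP hm2). rewrite (plus_INR (d * (n-1)) 1) (mult_INR 2 m) (mult_INR d (n-1)) subINR; last by lia.
  by simpl; rewrite /r; lra.
have HR := le_INR _ _ (elimT leP H).
rewrite !mult_INR !expINR subINR in HR; last by [].
have mpos : 0 < INR m by nra.
have NMpos : 0 < INR N - INR m by nra.
have LHSpos : 0 < (INR N - INR m) ^ m by apply: pow_lt.
have Xpos : 0 < INR X.
  case: (Rle_lt_dec (INR X) 0) => // hX.
  have hX0 : INR X = 0 by have := pos_INR X; lra.
  rewrite hX0 in HR. simpl in HR. lra.
split => //.
have rpos : 0 < r by lra.
have hl := ln_le _ _ LHSpos HR.
have p1 : 0 < INR n ^ n by apply: pow_lt.
have p2 : 0 < INR m ^ m by apply: pow_lt.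
have p3 : 0 < 2 * INR X by lra.
have p4 : 0 < 2 * INR X * INR n ^ n by apply: Rmult_lt_0_compat.
rewrite (ln_mult _ _ p4 p2) (ln_mult _ _ p3 p1) (ln_mult 2 _ ltac:(lra) Xpos) !ln_pow // in hl.
have mle : 2 * INR m <= INR d * r by lra.
have hrat : r * INR m <= (INR N - INR m) * (2 * INR d).
  have q1 : (2 * INR m - INR d * r) * (2 * INR d + r) <= 0.
    have : 0 <= (INR d * r - 2 * INR m) * (2 * INR d + r) by apply: Rmult_le_pos; lra.
    lra.
  have q2 : 0 <= INR d * r * (r - 2 - 2 * INR d).
    apply: Rmult_le_pos; last lra. apply: Rmult_le_pos; lra.
  nra.
have d2 : 0 < 2 * INR d by lra.
have hD := ln_le _ _ (Rmult_lt_0_compat _ _ rpos mpos) hrat.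
rewrite (ln_mult _ _ rpos mpos) (ln_mult _ _ NMpos d2) in hD.
have hL : 0 <= ln r - ln (2 * INR d).
  have := ln_le (2 * INR d) r d2 ltac:(lra). lra.
have e1 : INR m * (ln r - ln (2 * INR d)) <= INR m * (ln (INR N - INR m) - ln (INR m)).
  apply: Rmult_le_compat_l; lra.
have e2 : INR d * (r - 1) / 2 * (ln r - ln (2 * INR d)) <= INR m * (ln r - ln (2 * INR d)).
  apply: Rmult_le_compat_r; lra.
rewrite /r in e1 e2 hL hD *.
lra.
Qed.

Lemma hs_ok d n : (1 <= d)%N -> (20 ^ 4 * d <= n)%N -> 200 * sqrt (INR d / INR n) <= 1/2.
Proof.
move=> hd hn.
have d1 : 1 <= INR d by have := le_INR _ _ (elimT leP hd); simpl; lra.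
have hnr : 160000 * INR d <= INR n.
  have := le_INR _ _ (elimT leP hn); rewrite mult_INR expINR.
  have -> : INR 20 = 20 by simpl; lra. lra.
have npos : 0 < INR n by lra.
have q : INR d / INR n <= (1/400)^2.
  apply (Rmult_le_reg_r (INR n)) => //.
  unfold Rdiv; rewrite Rmult_assoc Rinv_l; last by apply: Rgt_not_eq.
  lra.
have := sqrt_le_1_alt _ _ q. rewrite sqrt_pow2; lra.
Qed.

Lemma ln_lt_id r : 0 < r -> ln r < r.
Proof.
move=> rp; have h : r < exp r by have := exp_ineq1 r (Rgt_not_eq _ _ rp); lra.
have := ln_increasing _ _ rp h. by rewrite ln_exp.
Qed.

Lemma INR_ge1 k : 0 < INR k -> 1 <= INR k.
Proof. case: k => [|k] h; [simpl in h; lra | rewrite S_INR; have := pos_INR k; lra]. Qed.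

Theorem mainTheorem15 (d : nat) (c : R) (hc : good_c d c) :
  exists f : nat -> R,
    (forall eps : R, 0 < eps ->
       exists N : nat, forall n : nat, (N <= n)%N -> Rabs (f n) < eps) /\
    (exists N : nat, forall n : nat, (N <= n)%N ->
       Rpower (INR n) ((INR d - 2) * INR n / 2 * (1 - f n)) <= INR (countX d c n)).
Proof.
case: (posnP d) => [d0|dpos].
  exfalso. have := hc 1%N (leqnn 1). rewrite d0 /prob_not_tiny /=.
  rewrite Rdiv_0_l sqrt_0 Rmult_0_r.
  set a := INR _. set b := INR _.
  have ha : 0 <= a by apply: pos_INR.
  have hb : 0 <= b by apply: pos_INR.
  case: (Rle_lt_or_eq_dec _ _ hb) => hb'.
    have : 0 <= a / b by apply: Rmult_le_pos => //; apply: Rlt_le; apply: Rinv_0_lt_compat.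
    lra.
  rewrite -hb' /Rdiv Rinv_0 Rmult_0_r. lra.
have [C hC] : exists C, C = (20 ^ 4)%N by eauto.
set n0 := (C * d + 2 * d + 3)%N.
have KEY : forall n, (n0 <= n)%N ->
  0 < INR (countX d c n) /\
  INR d * (INR n - 1) / 2 * (ln (INR n) - ln (2 * INR d)) - INR n * ln (INR n) - ln 2
    <= ln (INR (countX d c n)).
  move=> n hn; apply: key_real => //; first by rewrite /n0 in hn; lia.
  apply: hs_ok => //; rewrite -hC; rewrite /n0 in hn; lia.
have d1 : 1 <= INR d by have := le_INR _ _ (elimT leP dpos); simpl; lra.
have hn0r : forall n, (n0 <= n)%N -> 2 * INR d + 3 <= INR n.
  move=> n hn. have := le_INR _ _ (elimT leP hn). rewrite /n0 !plus_INR !mult_INR.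
  have := pos_INR C. have := pos_INR d. simpl INR. nra.
case: (leqP 3 d) => d3; last first.
  exists (fun _ => 0); split.
    move=> eps he; exists 0%N => n _; rewrite Rabs_R0; lra.
  exists n0 => n hn.
  have [Xp _] := KEY n hn.
  have dr : INR d <= 2 by have := le_INR _ _ (elimT leP (d3 : (d <= 2)%N)); simpl; lra.
  have rr := hn0r n hn.
  have lnp : 0 <= ln (INR n) by rewrite -ln_1; apply: ln_le; lra.
  apply: Rle_trans (INR_ge1 _ Xp).
  rewrite /Rpower; apply: (Rle_trans _ (exp 0)); last by rewrite exp_0; lra.
  apply: exp_le'.
  have : (INR d - 2) * INR n / 2 * (1 - 0) <= 0.
    have : 0 <= (2 - INR d) * INR n by apply: Rmult_le_pos; lra.
    lra.
  move=> h; have := Rmult_le_compat_r _ _ _ lnp h. rewrite Rmult_0_l. lra.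
have d3r : 3 <= INR d by have := le_INR _ _ (elimT leP d3); simpl; lra.
set K := fun n : nat => INR d / 2 * ln (INR n) + INR d * INR n / 2 * ln (2 * INR d) + ln 2.
set E := fun n : nat => (INR d - 2) * INR n / 2.
exists (fun n => K n / (E n * ln (INR n))).
have L2d : 0 <= ln (2 * INR d) by rewrite -ln_1; apply: ln_le; lra.
split.
  move=> eps he.
  set A := INR d + INR d * ln (2 * INR d) + 2.
  have [k hk] := INR_archimed 1 (exp (A / eps)) ltac:(lra).
  exists (k + n0)%N => n hn.
  have hn' : (n0 <= n)%N by lia.
  have rr := hn0r n hn'.
  have hkn : INR k <= INR n by apply: le_INR; apply/leP; lia.
  have ex : exp (A / eps) < INR n by lra.
  have hl : A / eps < ln (INR n).
    have := ln_increasing _ _ (exp_pos _) ex. by rewrite ln_exp.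
  have hA : A < eps * ln (INR n).
    have := Rmult_lt_compat_r eps _ _ he hl.
    unfold Rdiv; rewrite Rmult_assoc Rinv_l; last by apply: Rgt_not_eq.
    lra.
  have lnp : 0 < ln (INR n) by rewrite -ln_1; apply: ln_increasing; lra.
  have lnr := ln_lt_id (INR n) ltac:(lra).
  have ln2r : ln 2 <= ln (INR n) by apply: ln_le; lra.
  have Epos : 0 < E n.
    rewrite /E; have : 0 < (INR d - 2) * INR n by apply: Rmult_lt_0_compat; lra.
    lra.
  have Dpos : 0 < E n * ln (INR n) by apply: Rmult_lt_0_compat.
  have Kpos : 0 <= K n.
    rewrite /K. have : 0 <= INR d * INR n / 2 * ln (2 * INR d).
      apply: Rmult_le_pos => //. have := pos_INR n; nra.
    have : 0 <= INR d / 2 * ln (INR n) by apply: Rmult_le_pos; lra.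
    have : 0 <= ln 2 by rewrite -ln_1; apply: ln_le; lra.
    lra.
  have fpos : 0 <= K n / (E n * ln (INR n)).
    by apply: Rmult_le_pos => //; apply: Rlt_le; apply: Rinv_0_lt_compat.
  rewrite Rabs_pos_eq //.
  have KD : K n < eps * (E n * ln (INR n)).
    rewrite /K /E.
    have s1 : INR n / 2 * (eps * ln (INR n)) <= eps * ((INR d - 2) * INR n / 2 * ln (INR n)).
      have q0 : 0 <= (INR d - 3) * INR n by apply: Rmult_le_pos; have := pos_INR n; lra.
      have q1 : 0 <= eps * ln (INR n) by apply: Rmult_le_pos; lra.
      have q2 : 0 <= (INR d - 3) * INR n * (eps * ln (INR n)) by apply: Rmult_le_pos.
      have eq : eps * ((INR d - 2) * INR n / 2 * ln (INR n)) =
        INR n / 2 * (eps * ln (INR n)) + (INR d - 3) * INR n * (eps * ln (INR n)) / 2.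
        field.
      lra.
    have s2 : INR n / 2 * A < INR n / 2 * (eps * ln (INR n)).
      apply: Rmult_lt_compat_l => //; lra.
    have eA : INR n / 2 * A = INR d / 2 * INR n + INR d * INR n / 2 * ln (2 * INR d) + INR n.
      rewrite /A; field.
    have s3 : INR d / 2 * ln (INR n) <= INR d / 2 * INR n by apply: Rmult_le_compat_l; lra.
    lra.
  apply (Rmult_lt_reg_r (E n * ln (INR n))) => //.
  unfold Rdiv; rewrite Rmult_assoc Rinv_l; last by apply: Rgt_not_eq.
  lra.
exists n0 => n hn.
have [Xp Hk] := KEY n hn.
have rr := hn0r n hn.
have lnp : 0 < ln (INR n) by rewrite -ln_1; apply: ln_increasing; lra.
have Epos : 0 < E n.
  rewrite /E; have : 0 < (INR d - 2) * INR n by apply: Rmult_lt_0_compat; lra.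
  lra.
rewrite /Rpower -[X in _ <= X](exp_ln _ Xp).
apply: exp_le'.
have -> : E n * (1 - K n / (E n * ln (INR n))) * ln (INR n) = E n * ln (INR n) - K n.
  field; split; apply: Rgt_not_eq; lra.
rewrite /E /K.
have : 0 <= INR d / 2 * ln (2 * INR d) by apply: Rmult_le_pos; lra.
nra.
Qed.
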